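(* Let $\epsilon>0$ and let $\mathcal{P}^\epsilon$ be the strategy \[ M_n=\begin{cases}-\epsilon s_{n-1} & \text{if } |s_{i-1}|\le\sqrt{i+2/\epsilon}-1 \text{ for all } i=1,\dots,n,\\ 0&\text{otherwise.}\end{cases} \] Then $\mathcal{P}^\epsilon$ weakly forces the event \[ E_3^\epsilon:=\Bigl\{\xi:\ \exists n\ |s_n|>\sqrt{n+1+2/\epsilon}-1\ \ \text{or}\ \ \bigl(\limsup_{n\to\infty}|s_n|=\infty\ \text{and}\ s_n\ne0\ \text{for all but finitely many } n\bigr)\Bigr\}. \]
   Context: Fair-coin game: in rounds $n=1,2,\dots$ Skeptic announces $M_n\in\mathbb{R}$ (depending only on $x_1,\dots,x_{n-1}$), then Reality announces $x_n\in\{-1,1\}$. A path is an infinite sequence $\xi=x_1x_2\cdots\in\{-1,1\}^{\mathbb{N}}$, and $\Omega$ is the set of paths. We write $s_n:=x_1+\cdots+x_n$, with $s_0=0$. The capital process of a strategy with zero initial capital is $\mathcal{K}^{\mathcal{P}}_n=\sum_{k=1}^nM_kx_k$. A strategy $\mathcal{P}$ weakly forces $E\subseteq\Omega$ if $\mathcal{K}^{\mathcal{P}}_n(\xi)\ge-1$ for all $\xi\in\Omega$ and $n\ge0$, and $\limsup_n\mathcal{K}^{\mathcal{P}}_n(\xi)=\infty$ for every $\xi\notin E$. Skeptic can weakly force $E$ if some strategy does. *)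

(* Defs.v *)
From Stdlib Require Import Reals Lra ClassicalEpsilon.
Open Scope R_scope.

(* A path xi : nat -> bool; Reality's move in round n (n >= 1) is
   x_n = 1 if xi n = true, -1 otherwise (xi 0 is unused). *)
Definition path := nat -> bool.

Definition x (xi : path) (n : nat) : R := if xi n then 1 else -1.

Fixpoint s (xi : path) (n : nat) : R :=
  match n with
  | O => 0
  | S m => s xi m + x xi (S m)
  end.

(* A strategy: M n xi is Skeptic's move in round n (used for n >= 1). *)
Definition strategy := nat -> path -> R.

Definition predictable (M : strategy) : Prop :=
  forall (n : nat) (xi xi' : path),
    (forall k, (1 <= k <= n - 1)%nat -> xi k = xi' k) -> M n xi = M n xi'.

Fixpoint capital (M : strategy) (xi : path) (n : nat) : R :=
  match n with
  | O => 0
  | S m => capital M xi m + M (S m) xi * x xi (S m)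
  end.

Definition limsup_infty (u : nat -> R) : Prop :=
  forall (C : R) (N : nat), exists n, (N <= n)%nat /\ C < u n.

Definition weakly_forces (M : strategy) (E : path -> Prop) : Prop :=
  predictable M /\
  (forall (xi : path) (n : nat), -1 <= capital M xi n) /\
  (forall xi : path, ~ E xi -> limsup_infty (capital M xi)).

Definition P_eps (eps : R) : strategy :=
  fun n xi =>
    if excluded_middle_informative
         (forall i : nat, (1 <= i <= n)%nat ->
            Rabs (s xi (i - 1)) <= sqrt (INR i + 2 / eps) - 1)
    then - eps * s xi (n - 1)
    else 0.

Definition E3 (eps : R) (xi : path) : Prop :=
  (exists n : nat, Rabs (s xi n) > sqrt (INR n + 1 + 2 / eps) - 1) \/
  (limsup_infty (fun n => Rabs (s xi n)) /\
   exists N : nat, forall n : nat, (N <= n)%nat -> s xi n <> 0).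

(* Main.v *)
Require Import Defs.
From Stdlib Require Import Reals.
From Stdlib Require Import Lra Lia Classical ClassicalEpsilon.
Open Scope R_scope.

Definition active (eps : R) (xi : path) (n : nat) : Prop :=
  forall i : nat, (1 <= i <= n)%nat ->
    Rabs (s xi (i - 1)) <= sqrt (INR i + 2 / eps) - 1.

Definition fK (eps : R) (xi : path) (n : nat) : R :=
  eps * (INR n - s xi n ^ 2) / 2.

Lemma x_sq xi n : x xi n ^ 2 = 1.
Proof. unfold x; destruct (xi n); ring. Qed.

Lemma active_S eps xi n : active eps xi (S n) -> active eps xi n.
Proof. intros H i Hi; apply H; lia. Qed.

Lemma P_on eps xi n : active eps xi n -> P_eps eps n xi = - eps * s xi (n - 1).
Proof.
  intros H; unfold P_eps.
  destruct (excluded_middle_informative _) as [_|C]; [reflexivity|].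
  exfalso; apply C; exact H.
Qed.

Lemma P_off eps xi n : ~ active eps xi n -> P_eps eps n xi = 0.
Proof.
  intros H; unfold P_eps.
  destruct (excluded_middle_informative _) as [A|_]; [|reflexivity].
  exfalso; apply H; exact A.
Qed.

Lemma fK_bound eps xi n : 0 < eps -> active eps xi n -> -1 <= fK eps xi n.
Proof.
  intros He H. unfold fK. destruct n as [|m].
  - simpl. lra.
  - assert (Hm := H (S m) ltac:(lia)).
    replace (S m - 1)%nat with m in Hm by lia.
    assert (Hpos : 0 <= INR (S m) + 2 / eps).
    { assert (0 < 2 / eps) by (apply Rdiv_lt_0_compat; lra).
      pose proof (pos_INR (S m)). lra. }
    assert (Ha : Rabs (s xi (S m)) <= sqrt (INR (S m) + 2 / eps)).
    { simpl s. eapply Rle_trans. apply Rabs_triang.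
      assert (Rabs (x xi (S m)) = 1) by (unfold x; destruct (xi (S m)); [apply Rabs_R1 | rewrite Rabs_left; lra]).
      lra. }
    assert (Hsq : s xi (S m) ^ 2 <= INR (S m) + 2 / eps).
    { rewrite <- pow2_abs. rewrite <- (sqrt_sqrt _ Hpos).
      simpl. rewrite Rmult_1_r. apply Rmult_le_compat; auto using Rabs_pos. }
    assert (eps * (INR (S m) - s xi (S m) ^ 2) >= eps * (- (2 / eps))).
    { apply Rle_ge, Rmult_le_compat_l; lra. }
    replace (eps * (- (2 / eps))) with (-2) in H0 by (field; lra).
    lra.
Qed.

Lemma capital_inv eps xi n : 0 < eps ->
  (active eps xi n /\ capital (P_eps eps) xi n = fK eps xi n) \/
  (~ active eps xi n /\ -1 <= capital (P_eps eps) xi n).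
Proof.
  intros He. induction n as [|n IH].
  - left. split.
    + intros i Hi; lia.
    + unfold fK; simpl; field.
  - destruct (classic (active eps xi (S n))) as [A|NA].
    + left. split; [exact A|].
      destruct IH as [[_ IH]|[NA _]].
      * simpl capital. rewrite IH, (P_on _ _ _ A).
        replace (S n - 1)%nat with n by lia.
        unfold fK. simpl s. rewrite S_INR.
        pose proof (x_sq xi (S n)). nra.
      * exfalso; apply NA, active_S, A.
    + right. split; [exact NA|].
      simpl capital. rewrite (P_off _ _ _ NA), Rmult_0_l, Rplus_0_r.
      destruct IH as [[A IH]|[_ IH]].
      * rewrite IH; apply fK_bound; auto.
      * exact IH.
Qed.

Lemma s_dep xi xi' n : (forall k, (1 <= k <= n)%nat -> xi k = xi' k) ->
  s xi n = s xi' n.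
Proof.
  induction n as [|n IH]; intros H; simpl; [reflexivity|].
  rewrite IH by (intros; apply H; lia).
  unfold x; rewrite H by lia; reflexivity.
Qed.

Theorem lemma3 (eps : R) (Heps : 0 < eps) :
  weakly_forces (P_eps eps) (E3 eps).
Proof.
  split; [|split].
  - intros n xi xi' H.
    assert (Hs : forall i, (1 <= i <= n)%nat -> s xi (i - 1) = s xi' (i - 1)).
    { intros i Hi; apply s_dep; intros k Hk; apply H; lia. }
    assert (Hn : (n = 0)%nat \/ (1 <= n)%nat) by lia.
    assert (Hsn : s xi (n - 1) = s xi' (n - 1)).
    { destruct Hn as [->|Hn]; [reflexivity|apply Hs; lia]. }
    destruct (classic (active eps xi n)) as [A|NA].
    + assert (A' : active eps xi' n).
      { intros i Hi; rewrite <- Hs by exact Hi; apply A; exact Hi. }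
      rewrite (P_on _ _ _ A), (P_on _ _ _ A'), Hsn; reflexivity.
    + assert (NA' : ~ active eps xi' n).
      { intros A'; apply NA; intros i Hi; rewrite Hs by exact Hi; apply A'; exact Hi. }
      rewrite (P_off _ _ _ NA), (P_off _ _ _ NA'); reflexivity.
  - intros xi n. destruct (capital_inv eps xi n Heps) as [[A H]|[_ H]].
    + rewrite H; apply fK_bound; auto.
    + exact H.
  - intros xi NE.
    assert (Aall : forall n, active eps xi n).
    { intros n i Hi.
      destruct (Rle_or_lt (Rabs (s xi (i - 1))) (sqrt (INR i + 2 / eps) - 1)) as [h|h]; [exact h|].
      exfalso. apply NE. left. exists (i - 1)%nat.
      replace (INR (i - 1) + 1) with (INR i); [lra|].
      replace i with (S (i - 1)) at 1 by lia. rewrite S_INR; reflexivity. }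
    assert (Kf : forall n, capital (P_eps eps) xi n = fK eps xi n).
    { intros n; destruct (capital_inv eps xi n Heps) as [[_ H]|[NA _]];
        [exact H| exfalso; apply NA, Aall]. }
    assert (NB : ~ (limsup_infty (fun n => Rabs (s xi n)) /\
                   exists N : nat, forall n : nat, (N <= n)%nat -> s xi n <> 0)).
    { intros B; apply NE; right; exact B. }
    intros C N.
    apply not_and_or in NB. destruct NB as [NL|NZ].
    + unfold limsup_infty in NL.
      apply not_all_ex_not in NL; destruct NL as [C0 NL].
      apply not_all_ex_not in NL; destruct NL as [N0 NL].
      destruct (INR_unbounded (2 * C / eps + C0 ^ 2)) as [M HM].
      exists (N + N0 + M)%nat. split; [lia|].
      assert (Hb : Rabs (s xi (N + N0 + M)) <= C0).
      { destruct (Rle_or_lt (Rabs (s xi (N + N0 + M))) C0) as [h|h]; [exact h|].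
        exfalso; apply NL; exists (N + N0 + M)%nat; split; [lia|exact h]. }
      rewrite Kf. unfold fK.
      assert (Hs2 : s xi (N + N0 + M) ^ 2 <= C0 ^ 2).
      { rewrite <- pow2_abs. simpl. rewrite !Rmult_1_r.
        apply Rmult_le_compat; auto using Rabs_pos. }
      assert (HI : INR M <= INR (N + N0 + M)) by (apply le_INR; lia).
      assert (Hg : 2 * C / eps < INR (N + N0 + M) - s xi (N + N0 + M) ^ 2) by lra.
      apply Rmult_lt_compat_l with (r := eps / 2) in Hg; [|lra].
      replace (eps / 2 * (2 * C / eps)) with C in Hg by (field; lra).
      lra.
    + destruct (INR_unbounded (2 * C / eps)) as [M HM].
      apply not_ex_all_not with (n := (N + M)%nat) in NZ.
      apply not_all_ex_not in NZ; destruct NZ as [n NZ].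
      apply imply_to_and in NZ; destruct NZ as [Hn NZ].
      apply NNPP in NZ.
      exists n. split; [lia|].
      rewrite Kf. unfold fK. rewrite NZ.
      assert (HI : INR M <= INR n) by (apply le_INR; lia).
      assert (Hg : 2 * C / eps < INR n - 0 ^ 2) by (simpl; lra).
      apply Rmult_lt_compat_l with (r := eps / 2) in Hg; [|lra].
      replace (eps / 2 * (2 * C / eps)) with C in Hg by (field; lra).
      lra.
Qed.
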